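(* Let $\theta^1,\theta^2\in[0,\infty)^{s_0}$. Suppose the balance equation (B) holds for $\theta^1$, for $\theta^2$, and for $\theta^1-\frac{\theta^1\cdot\zeta_k}{\theta^2\cdot\zeta_k}\theta^2$ for every $k\in(\Gamma_{\theta^1}^+\cap\Gamma_{\theta^2}^-)\cup(\Gamma_{\theta^1}^-\cap\Gamma_{\theta^2}^+)$ (for such $k$ the coefficient $-\frac{\theta^1\cdot\zeta_k}{\theta^2\cdot\zeta_k}$ is positive). Then (B) holds for $c_1\theta^1+c_2\theta^2$ for all $c_1,c_2>0$.
   Context: Fix integers $s_0,r_0\ge 1$ and, for $k=1,\dots,r_0$, vectors $\nu_k,\nu_k'\in\mathbb{N}^{s_0}$ (reactant and product vectors of reaction $k$); set $\zeta_k=\nu_k'-\nu_k$. Fix $\alpha\in[0,\infty)^{s_0}$ and $\beta\in\mathbb{R}^{r_0}$ and set $\rho_k=\beta_k+\nu_k\cdot\alpha$. For $\theta\in[0,\infty)^{s_0}$ let $\Gamma_\theta^+=\{k:\theta\cdot\zeta_k>0\}$, $\Gamma_\theta^-=\{k:\theta\cdot\zeta_k<0\}$ and $\mathrm{supp}(\theta)=\{i:\theta_i>0\}$. A maximum over the empty set is $-\infty$. For $\theta\in[0,\infty)^{s_0}$ and $\gamma\in\mathbb{R}$: the balance equation for $\theta$ is (B) $\max_{k\in\Gamma_\theta^-}\rho_k=\max_{k\in\Gamma_\theta^+}\rho_k$; the time-scale constraint for $\theta$ at $\gamma$ is (T) $\gamma\le\max_{i:\theta_i>0}\alpha_i-\max_{k\in\Gamma_\theta^+\cup\Gamma_\theta^-}\rho_k$;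 Condition 3.2 holds for $\theta$ at $\gamma$ if (B) or (T) holds. *)

(* Defs.v *)
From HB Require Import structures.
From mathcomp Require Import all_boot all_order all_algebra.
Set Implicit Arguments. Unset Strict Implicit. Unset Printing Implicit Defensive.
Import Order.TTheory GRing.Theory Num.Theory.
Local Open Scope ring_scope.

(* max on R extended by -infinity (represented by None) *)
Definition omax (R : realDomainType) (x y : option R) : option R :=
  match x, y with
  | None, _ => y
  | _, None => x
  | Some a, Some b => Some (Num.max a b)
  end.

Definition maxover (R : realDomainType) (r0 : nat) (P : pred 'I_r0)
  (f : 'I_r0 -> R) : option R :=
  \big[@omax R/None]_(k | P k) Some (f k).

Definition zeta (s0 r0 : nat) (nu nu' : 'I_r0 -> 'I_s0 -> nat)
  (k : 'I_r0) (i : 'I_s0) : int := (nu' k i)%:Z - (nu k i)%:Z.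

Definition dotz (R : realDomainType) (s0 : nat) (theta : 'I_s0 -> R)
  (z : 'I_s0 -> int) : R := \sum_(i < s0) theta i * (z i)%:~R.

Definition rho (R : realDomainType) (s0 r0 : nat) (alpha : 'I_s0 -> R)
  (beta : 'I_r0 -> R) (nu : 'I_r0 -> 'I_s0 -> nat) (k : 'I_r0) : R :=
  beta k + \sum_(i < s0) (nu k i)%:R * alpha i.

Definition Gamma_plus (R : realDomainType) (s0 r0 : nat)
  (nu nu' : 'I_r0 -> 'I_s0 -> nat) (theta : 'I_s0 -> R) : pred 'I_r0 :=
  [pred k | 0 < dotz theta (zeta nu nu' k)].

Definition Gamma_minus (R : realDomainType) (s0 r0 : nat)
  (nu nu' : 'I_r0 -> 'I_s0 -> nat) (theta : 'I_s0 -> R) : pred 'I_r0 :=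
  [pred k | dotz theta (zeta nu nu' k) < 0].

Definition balance (R : realDomainType) (s0 r0 : nat) (alpha : 'I_s0 -> R)
  (beta : 'I_r0 -> R) (nu nu' : 'I_r0 -> 'I_s0 -> nat) (theta : 'I_s0 -> R)
  : Prop :=
  maxover (Gamma_minus nu nu' theta) (rho alpha beta nu)
  = maxover (Gamma_plus nu nu' theta) (rho alpha beta nu).

(* Main.v *)
Require Import Defs.
From HB Require Import structures.
From mathcomp Require Import all_boot all_order all_algebra.
Import Order.TTheory GRing.Theory Num.Theory.
Local Open Scope ring_scope.
Section MaxOver.
Variable R : realFieldType.
Variable n : nat.

Lemma maxover_ub (P : pred 'I_n) (f : 'I_n -> R) (k : 'I_n) :
  P k -> exists m, maxover P f = Some m /\ f k <= m.
Proof.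
move=> Pk; rewrite /maxover.
have : k \in index_enum 'I_n by rewrite mem_index_enum.
elim: (index_enum _) => [|x s IH] //.
rewrite in_cons big_cons => /orP [/eqP <-|ks].
  rewrite Pk; case: (\big[_/_]_(i <- s | P i) _) => [m|] /=.
    by exists (Num.max (f k) m); split => //; rewrite le_max lexx.
  by exists (f k).
have [m [-> fm]] := IH ks.
case: (P x) => //=; last by exists m.
exists (Num.max (f x) m); split => //; rewrite le_max fm orbT //.
Qed.

Lemma maxover_wit (P : pred 'I_n) (f : 'I_n -> R) m :
  maxover P f = Some m -> exists k, P k /\ f k = m.
Proof.
rewrite /maxover; move: m.
apply: (big_ind (fun x => forall m, x = Some m -> exists k, P k /\ f k = m)) => //.
  move=> [x|] [y|] Hx Hy m /=.
  - by case: leP => _ [<-]; [apply: Hy | apply: Hx].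
  - exact: Hx.
  - exact: Hy.
  - done.
by move=> i Pi m [<-]; exists i.
Qed.

Definition dom (P Q : pred 'I_n) (f : 'I_n -> R) :=
  forall k, P k -> exists k', Q k' /\ f k <= f k'.

Lemma maxover_dom P Q f : maxover P f = maxover Q f -> dom P Q f.
Proof.
move=> E k Pk; have [m [Em le]] := maxover_ub _ f _ Pk.
rewrite E in Em; have [k' [Qk' fk']] := maxover_wit _ _ _ Em.
by exists k'; rewrite fk'.
Qed.

Lemma dom_maxover P Q f : dom P Q f -> dom Q P f -> maxover P f = maxover Q f.
Proof.
move=> dPQ dQP.
case EP: (maxover P f) => [mP|]; case EQ: (maxover Q f) => [mQ|] //.
- have [kP [PkP fkP]] := maxover_wit _ _ _ EP; have [kQ [QkQ fkQ]] := maxover_wit _ _ _ EQ.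
  have [k1 [Qk1 le1]] := dPQ _ PkP; have [k2 [Pk2 le2]] := dQP _ QkQ.
  have [m1 [E1 l1]] := maxover_ub _ f _ Qk1; have [m2 [E2 l2]] := maxover_ub _ f _ Pk2.
  rewrite EQ in E1; rewrite EP in E2; case: E1 => E1; case: E2 => E2; subst.
  congr Some; apply/le_anti/andP; split.
    exact: le_trans le1 l1.
  exact: le_trans le2 l2.
- have [kP [PkP _]] := maxover_wit _ _ _ EP; have [k1 [Qk1 _]] := dPQ _ PkP.
  by have [m1 [E1 _]] := maxover_ub _ f _ Qk1; rewrite EQ in E1.
- have [kQ [QkQ _]] := maxover_wit _ _ _ EQ; have [k1 [Pk1 _]] := dQP _ QkQ.
  by have [m1 [E1 _]] := maxover_ub _ f _ Pk1; rewrite EP in E1.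
Qed.

Definition Bal (rho g : 'I_n -> R) :=
  maxover [pred k | g k < 0] rho = maxover [pred k | 0 < g k] rho.

Lemma Bal_ext rho g g' : (forall j, (0 < g j) = (0 < g' j)) ->
  (forall j, (g j < 0) = (g' j < 0)) -> Bal rho g -> Bal rho g'.
Proof.
move=> Hp Hn; rewrite /Bal => E.
have -> : maxover [pred k | g' k < 0] rho = maxover [pred k | g k < 0] rho.
  by apply: eq_bigl => j; rewrite /= Hn.
by rewrite E; apply: eq_bigl => j; rewrite /= Hp.
Qed.

Lemma Bal_combine rho gL gR g : Bal rho gL -> Bal rho gR ->
  (forall j, 0 < gL j -> 0 < g j) -> (forall j, gL j < 0 -> g j < 0) ->
  (forall j, 0 < gR j -> 0 < g j) -> (forall j, gR j < 0 -> g j < 0) ->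
  (forall j, 0 < g j -> 0 < gL j \/ 0 < gR j) ->
  (forall j, g j < 0 -> gL j < 0 \/ gR j < 0) -> Bal rho g.
Proof.
rewrite /Bal => EL ER pL nL pR nR Bp Bn.
apply: dom_maxover.
- move=> k /= /Bn [] h.
  + have [k' [h' le]] := maxover_dom _ _ _ EL _ h; exists k'; split => //; exact: pL.
  + have [k' [h' le]] := maxover_dom _ _ _ ER _ h; exists k'; split => //; exact: pR.
- move=> k /= /Bp [] h.
  + have [k' [h' le]] := maxover_dom _ _ _ (esym EL) _ h; exists k'; split => //; exact: nL.
  + have [k' [h' le]] := maxover_dom _ _ _ (esym ER) _ h; exists k'; split => //; exact: nR.
Qed.
Implicit Types a b L l U X : R.

Definition crit a b := ((0 < a) && (b < 0)) || ((a < 0) && (0 < b)).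
Definition tv a b := - (a / b).

Lemma ident a b X : b != 0 -> a + X * b = b * (X - tv a b).
Proof.
move=> b0; rewrite /tv opprK mulrDr [b * (a / b)]mulrC divfK //.
by rewrite addrC mulrC.
Qed.

Lemma a_eq a b : b != 0 -> a = b * (0 - tv a b).
Proof. by move=> b0; rewrite -ident // mul0r addr0. Qed.

Lemma sideL a b L l : 0 <= L -> L < l ->
  (crit a b -> L < tv a b -> tv a b <= l -> False) ->
  0 < a + L * b -> 0 < a + l * b.
Proof.
move=> L0 Ll H h.
have [b0|b0] := eqVneq b 0; first by move: h; rewrite b0 !mulr0.
move: h; rewrite !(ident a b _ b0).
case: (ltrgtP b 0) => hb; last by rewrite hb eqxx in b0.
- rewrite !nmulr_rgt0 // !subr_lt0 => Lt.
  case: (ltP l (tv a b)) => // tl; exfalso; apply: (H _ Lt tl).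
  have a0 : 0 < a.
    by rewrite (a_eq a b b0) nmulr_rgt0 // sub0r oppr_lt0 (le_lt_trans L0 Lt).
  by rewrite /crit a0 hb.
- by rewrite !pmulr_rgt0 // !subr_gt0 => tL; exact: lt_trans tL Ll.
Qed.

Lemma sideR a b l U : 0 < l -> l < U ->
  (crit a b -> l <= tv a b -> tv a b < U -> False) ->
  0 < a + U * b -> 0 < a + l * b.
Proof.
move=> l0 lU H h.
have [b0|b0] := eqVneq b 0; first by move: h; rewrite b0 !mulr0.
move: h; rewrite !(ident a b _ b0).
case: (ltrgtP b 0) => hb; last by rewrite hb eqxx in b0.
- by rewrite !nmulr_rgt0 // !subr_lt0 => Ut; exact: lt_trans lU Ut.
- rewrite !pmulr_rgt0 // !subr_gt0 => tU.
  case: (ltP (tv a b) l) => // lt; exfalso; apply: (H _ lt tU).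
  have a0 : a < 0.
    by rewrite (a_eq a b b0) pmulr_rlt0 // sub0r oppr_lt0 (lt_le_trans l0 lt).
  by rewrite /crit a0 hb orbT.
Qed.

Lemma sideRN a b l : 0 < l ->
  (crit a b -> l <= tv a b -> False) -> 0 < b -> 0 < a + l * b.
Proof.
move=> l0 H hb.
have b0 : b != 0 by rewrite gt_eqF.
rewrite (ident a b _ b0) pmulr_rgt0 // subr_gt0.
case: (ltP (tv a b) l) => // lt; exfalso; apply: (H _ lt).
have a0 : a < 0.
  by rewrite (a_eq a b b0) pmulr_rlt0 // sub0r oppr_lt0 (lt_le_trans l0 lt).
by rewrite /crit a0 hb orbT.
Qed.

Lemma claimB a b L l U : L <= l -> l <= U ->
  0 < a + l * b -> 0 < a + L * b \/ 0 < a + U * b.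
Proof.
move=> Ll lU h; case: (leP 0 b) => hb.
  by right; apply: (lt_le_trans h); rewrite lerD2l ler_wpM2r.
by left; apply: (lt_le_trans h); rewrite lerD2l ler_wnM2r // ltW.
Qed.

Lemma claimBN a b L l : L <= l ->
  0 < a + l * b -> 0 < a + L * b \/ 0 < b.
Proof.
move=> Ll h; case: (ltP 0 b) => hb; first by right.
by left; apply: (lt_le_trans h); rewrite lerD2l ler_wnM2r.
Qed.

Lemma critN a b : crit (- a) (- b) = crit a b.
Proof. by rewrite /crit !oppr_gt0 !oppr_lt0 orbC. Qed.

Lemma tvN a b : tv (- a) (- b) = tv a b.
Proof. by rewrite /tv invrN mulrNN. Qed.

Lemma negE a b X : (a + X * b < 0) = (0 < - a + X * - b).
Proof. by rewrite mulrN -opprD oppr_gt0. Qed.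

Lemma crit_tv a b : crit a b -> 0 < tv a b.
Proof.
rewrite /crit /tv oppr_gt0 => /orP [/andP [a0 b0] | /andP [a0 b0]].
  by rewrite pmulr_rlt0 // invr_lt0.
by rewrite nmulr_rlt0 // invr_gt0.
Qed.

Arguments sideL {a b L l}.
Arguments sideR {a b l U}.
Arguments sideRN {a b l}.
Arguments claimB {a b L l U}.
Arguments claimBN {a b L l}.

Lemma key (a b rho : 'I_n -> R) :
  Bal rho a -> Bal rho b ->
  (forall k, crit (a k) (b k) -> Bal rho (fun j => a j - (a k / b k) * b j)) ->
  forall l, 0 < l -> Bal rho (fun j => a j + l * b j).
Proof.
move=> Ba Bb Bk l l0.
case: (boolP [exists k, crit (a k) (b k) && (tv (a k) (b k) == l)]).
  case/existsP => k /andP [ck /eqP tk].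
  by apply: Bal_ext (Bk k ck) => j; rewrite -tk /tv mulNr.
move/existsPn => nc.
have ncl : forall j, crit (a j) (b j) -> tv (a j) (b j) != l.
  by move=> j cj; move: (nc j); rewrite cj.
pose t j := tv (a j) (b j).
pose PL := [pred k | crit (a k) (b k) && (t k < l)].
pose L := odflt 0 (maxover PL t).
have [L0 Ll HLc BL] : [/\ 0 <= L, L < l,
   (forall j, crit (a j) (b j) -> L < t j -> t j <= l -> False) &
   Bal rho (fun j => a j + L * b j)].
  rewrite /L; case E: (maxover PL t) => [m|] /=.
  - have [k [/andP [ck tkl] tk]] := maxover_wit _ _ _ E.
    have t0 : 0 < t k by apply: crit_tv.
    split.
    + by rewrite -tk; exact: ltW.
    + by rewrite -tk.
    + move=> j cj Lt tl.
      have tl' : t j < l by rewrite lt_neqAle ncl.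
      have Pj : PL j by rewrite /= cj tl'.
      have [m' [E' le']] := maxover_ub _ t j Pj.
      rewrite E in E'; case: E' => E'; subst m'.
      by move: Lt; rewrite ltNge le'.
    + by rewrite -tk; apply: Bal_ext (Bk k ck) => j; rewrite /t /tv mulNr.
  - split => //.
    + move=> j cj Lt tl.
      have tl' : t j < l by rewrite lt_neqAle ncl.
      have Pj : PL j by rewrite /= cj tl'.
      have [m' [E' _]] := maxover_ub _ t j Pj.
      by rewrite E in E'.
    + by apply: Bal_ext Ba => j; rewrite mul0r addr0.
pose PR := [pred k | crit (a k) (b k) && (l < t k)].
case E: (maxover PR (fun k => - t k)) => [m|].
- have [k [/andP [ck ltk] tk]] := maxover_wit _ _ _ E.
  pose U := t k.
  have lU : l < U by [].
  have HU : forall j, crit (a j) (b j) -> l <= t j -> t j < U -> False.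
    move=> j cj lj jU.
    have lj' : l < t j by rewrite lt_neqAle eq_sym ncl.
    have Pj : PR j by rewrite /= cj lj'.
    have [m' [E' le']] := maxover_ub _ (fun k => - t k) j Pj.
    rewrite E in E'; case: E' => E'; subst m'.
    by move: le'; rewrite -tk lerN2 leNgt jU.
  have BU : Bal rho (fun j => a j + U * b j).
    by apply: Bal_ext (Bk k ck) => j; rewrite /U /t /tv mulNr.
  apply: (Bal_combine _ _ _ _ BL BU) => j h.
  + exact: (sideL L0 Ll (HLc j) h).
  + move: h; rewrite !negE => h.
    apply: (sideL L0 Ll _ h); rewrite critN tvN; exact: HLc.
  + exact: (sideR l0 lU (HU j) h).
  + move: h; rewrite !negE => h.
    apply: (sideR l0 lU _ h); rewrite critN tvN; exact: HU.
  + exact: (claimB (ltW Ll) (ltW lU) h).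
  + move: h; rewrite !negE => h.
    exact: (claimB (ltW Ll) (ltW lU) h).
- have HU : forall j, crit (a j) (b j) -> l <= t j -> False.
    move=> j cj lj.
    have lj' : l < t j by rewrite lt_neqAle eq_sym ncl.
    have Pj : PR j by rewrite /= cj lj'.
    have [m' [E' _]] := maxover_ub _ (fun k => - t k) j Pj.
    by rewrite E in E'.
  apply: (Bal_combine _ _ _ _ BL Bb) => j h.
  + exact: (sideL L0 Ll (HLc j) h).
  + move: h; rewrite !negE => h.
    apply: (sideL L0 Ll _ h); rewrite critN tvN; exact: HLc.
  + exact: (sideRN l0 (HU j) h).
  + rewrite negE; apply: (sideRN l0); last by rewrite oppr_gt0.
    rewrite critN tvN; exact: HU.
  + exact: (claimBN (ltW Ll) h).
  + move: h; rewrite negE => h.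
    have := claimBN (ltW Ll) h; rewrite oppr_gt0 -negE; by [].
Qed.
End MaxOver.
Arguments Bal {R n}.
Arguments crit {R}.
Arguments tv {R}.
Arguments key {R n a b rho}.
Arguments Bal_ext {R n rho g g'}.

Lemma dotzD (R : realFieldType) s0 (t1 t2 : 'I_s0 -> R) c1 c2 z :
  dotz (fun i => c1 * t1 i + c2 * t2 i) z = c1 * dotz t1 z + c2 * dotz t2 z.
Proof.
rewrite /dotz !mulr_sumr -big_split /=; apply: eq_bigr => i _.
by rewrite mulrDl !mulrA.
Qed.

Lemma dotzB (R : realFieldType) s0 (t1 t2 : 'I_s0 -> R) c z :
  dotz (fun i => t1 i - c * t2 i) z = dotz t1 z - c * dotz t2 z.
Proof.
rewrite /dotz mulr_sumr -sumrB; apply: eq_bigr => i _.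
by rewrite mulrBl mulrA.
Qed.

Theorem lemma3p10 (R : realFieldType) (s0 r0 : nat)
  (nu nu' : 'I_r0 -> 'I_s0 -> nat) (alpha : 'I_s0 -> R) (beta : 'I_r0 -> R)
  (theta1 theta2 : 'I_s0 -> R) :
  (1 <= s0)%N -> (1 <= r0)%N ->
  (forall i, 0 <= alpha i) ->
  (forall i, 0 <= theta1 i) -> (forall i, 0 <= theta2 i) ->
  balance alpha beta nu nu' theta1 ->
  balance alpha beta nu nu' theta2 ->
  (forall k : 'I_r0,
     ((k \in Gamma_plus nu nu' theta1) && (k \in Gamma_minus nu nu' theta2))
     || ((k \in Gamma_minus nu nu' theta1) && (k \in Gamma_plus nu nu' theta2)) ->
     balance alpha beta nu nu'
       (fun i => theta1 i
          - (dotz theta1 (zeta nu nu' k) / dotz theta2 (zeta nu nu' k)) * theta2 i)) ->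
  forall c1 c2 : R, 0 < c1 -> 0 < c2 ->
    balance alpha beta nu nu' (fun i => c1 * theta1 i + c2 * theta2 i).
Proof.
move=> _ _ _ _ _ B1 B2 Bk c1 c2 c10 c20.
pose a k := dotz theta1 (zeta nu nu' k).
pose b k := dotz theta2 (zeta nu nu' k).
pose rh := rho alpha beta nu.
have Ba : Bal rh a := B1.
have Bb : Bal rh b := B2.
have Bk' : forall k, crit (a k) (b k) -> Bal rh (fun j => a j - (a k / b k) * b j).
  move=> k ck.
  have H : Bal rh (fun j => dotz (fun i => theta1 i - (a k / b k) * theta2 i)
                              (zeta nu nu' j)) := Bk k ck.
  by apply: Bal_ext H => j; rewrite dotzB.
have l0 : 0 < c2 / c1 by rewrite divr_gt0.
have H := key Ba Bb Bk' (c2 / c1) l0.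
suff : Bal rh (fun j => dotz (fun i => c1 * theta1 i + c2 * theta2 i) (zeta nu nu' j)) by [].
have E : forall j, dotz (fun i => c1 * theta1 i + c2 * theta2 i) (zeta nu nu' j)
                   = c1 * (a j + c2 / c1 * b j).
  move=> j; rewrite dotzD mulrDr mulrA mulrCA mulfV ?gt_eqF // mulr1 //.
apply: Bal_ext H => j; rewrite E.
  by rewrite pmulr_rgt0.
by rewrite pmulr_rlt0.
Qed.
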